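(* Let $p$ be a prime, $\sigma$ a $p$-uniform morphism on $\mathcal A_m$ and $a\in\mathbb{F}_p$. Then for every $n\in\mathbb{N}$, $M_{\sigma^n}(a)=M_\sigma(a)^n$.
   Context: $\mathcal A_m=\{0,\dots,m-1\}$. For $W=w_0\cdots w_{r-1}\in\mathcal A_m^*$ and $j\in\mathcal A_m$, $\beta_{W,j}(T)=\sum_{i:\,w_i=j}T^{r-1-i}\in\mathbb{F}_p[T]$ (zero if $j$ does not occur). For a uniform morphism $\tau$ on $\mathcal A_m$, $M_\tau(T)=(\beta_{\tau(i),j}(T))_{0\le i,j\le m-1}$, and $M_\tau(a)$ denotes its evaluation at $T=a$. *)

(* Defs.v *)
From HB Require Import structures.
From mathcomp Require Import all_boot all_order all_algebra.
Set Implicit Arguments. Unset Strict Implicit. Unset Printing Implicit Defensive.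
Import GRing.Theory.
Local Open Scope ring_scope.

(* Alphabet A_m = 'I_m; words are seq 'I_m.  A morphism on A_m is given by
   its images of letters. *)
Definition morphism (m : nat) := 'I_m -> seq 'I_m.

Definition uniform (m k : nat) (tau : morphism m) : Prop :=
  forall i, size (tau i) = k.

Definition morph_word (m : nat) (tau : morphism m) (w : seq 'I_m) : seq 'I_m :=
  flatten (map tau w).

Definition morph_iter (m : nat) (n : nat) (tau : morphism m) : morphism m :=
  fun i => iter n (morph_word tau) [:: i].

Definition beta (p m : nat) (W : seq 'I_m) (j : 'I_m) : {poly 'F_p} :=
  \sum_(i < size W | tnth (in_tuple W) i == j) 'X^(size W - 1 - i)%N.

Definition Mpoly (p m : nat) (tau : morphism m) : 'M[{poly 'F_p}]_m :=
  \matrix_(i < m, j < m) beta p (tau i) j.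

Definition Meval (p m : nat) (tau : morphism m) (a : 'F_p) : 'M['F_p]_m :=
  map_mx (fun q : {poly 'F_p} => q.[a]) (Mpoly p tau).

(* Main.v *)
Require Import Defs.
From mathcomp Require Import all_boot all_order all_algebra all_field.
Local Open Scope ring_scope.
Import GRing.Theory.

Section Aux.
Variables (p m : nat) (a : 'F_p).

Fixpoint ev (W : seq 'I_m) (j : 'I_m) : 'F_p :=
  match W with
  | [::] => 0
  | x :: W' => (x == j)%:R * a ^+ size W' + ev W' j
  end.

Lemma beta_ev W j : (beta p W j).[a] = ev W j.
Proof.
rewrite /beta; elim: W => [|x W IH] /=.
  by rewrite big_ord0 horner0.
rewrite big_mkcond big_ord_recl /= -big_mkcond /=.
rewrite hornerD -IH /= (tnth_nth x) /= subn1 /= subn0.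
congr (_ + _).
  by case: (x == j); rewrite ?hornerXn ?mul1r ?mul0r ?horner0.
set S := (\sum_(i < size W | _) _).
suff -> : S = \sum_(i < size W | tnth (in_tuple W) i == j) 'X^(size W - 1 - i) by [].
apply: eq_big => i.
  by rewrite !(tnth_nth x).
by move=> _; rewrite /bump /= subnDA.
Qed.

Lemma ev_cat U V j : ev (U ++ V) j = ev U j * a ^+ size V + ev V j.
Proof.
elim: U => [|x U IH] /=; first by rewrite mul0r add0r.
by rewrite IH size_cat exprD mulrDl addrA mulrA.
Qed.

End Aux.

Lemma mw_cons m (s : morphism m) x W : morph_word s (x :: W) = s x ++ morph_word s W.
Proof. by []. Qed.

Theorem corollary4p13 (p m : nat) (hp : prime p) (sigma : morphism m)
  (hsigma : uniform p sigma) (a : 'F_p) (n : nat) :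
  Meval (morph_iter n sigma) a = (Meval sigma a) ^+ n.
Proof.
have Ferm : forall k, a ^+ (p * k) = a ^+ k.
  move=> k; rewrite exprM; have := expf_card a; rewrite card_Fp // => ->.
  by [].
have sizew : forall W, size (morph_word sigma W) = (p * size W)%N.
  elim=> [|x W IH]; first by rewrite muln0.
  rewrite mw_cons size_cat IH hsigma /=.
  by rewrite mulnS.
have key : forall W j, @ev p m a (morph_word sigma W) j =
   \sum_(l < m) @ev p m a W l * @ev p m a (sigma l) j.
  elim=> [|x W IH] j /=.
    by rewrite /morph_word /= big1 // => l _; rewrite mul0r.
  rewrite mw_cons ev_cat sizew Ferm IH.
  rewrite [RHS](eq_bigr _ (fun l _ => mulrDl _ _ _)) big_split /=; congr (_ + _).
  rewrite (bigD1 x) //= eqxx mul1r big1 ?addr0; first by rewrite mulrC.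
  by move=> l /negbTE; rewrite eq_sym => ->; rewrite !mul0r.
elim: n => [|n IH].
  by apply/matrixP => i j; rewrite /Meval /Mpoly !mxE beta_ev /= expr0 mulr1 addr0.

rewrite exprSr -IH -mulmxE; apply/matrixP => i j.
rewrite /Meval /Mpoly !mxE beta_ev /morph_iter iterS key.
by apply: eq_bigr => l _; rewrite !mxE !beta_ev.
Qed.
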